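(* For all $d\ge1$, $\alpha>1$, positive weights $\boldsymbol\gamma=\{\gamma_u\}$ with $\gamma_\emptyset=1$, and $M>0$, the index set $\mathcal A_d(M)$ satisfies $$|\mathcal A_d(M)|\le M^q\,C_{1,d,q,\alpha,\boldsymbol\gamma}\qquad\text{for all }q>\tfrac1\alpha,\qquad C_{1,d,q,\alpha,\boldsymbol\gamma}:=\sum_{u\subseteq\{1:d\}}\gamma_u^q[2\zeta(\alpha q)]^{|u|}.$$ Moreover, if $M\ge1$ then $|\mathcal A_d(M)|\ge(\gamma_{\{1\}}M)^{1/\alpha}$.
   Context: $\{1:d\}=\{1,\ldots,d\}$; $\zeta$ is the Riemann zeta function. Weights $\gamma_u>0$ for finite $u\subset\mathbb N$, $\gamma_\emptyset=1$. For $\mathbf h\in\mathbb Z^d$, $\mathrm{supp}(\mathbf h)=\{j:h_j\ne0\}$, $r(\mathbf h)=\gamma_{\mathrm{supp}(\mathbf h)}^{-1}\prod_{j\in\mathrm{supp}(\mathbf h)}|h_j|^\alpha$ (so $r(\mathbf0)=1$), and $\mathcal A_d(M)=\{\mathbf h\in\mathbb Z^d:r(\mathbf h)\le M\}$. *)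

(* Defs.v *)
From HB Require Import structures.
From mathcomp Require Import all_boot all_order all_algebra finmap.
From mathcomp Require Import all_classical all_reals all_analysis.
Set Implicit Arguments. Unset Strict Implicit. Unset Printing Implicit Defensive.
Import Order.TTheory GRing.Theory Num.Theory.
Local Open Scope classical_set_scope.
Local Open Scope ring_scope.

(* Riemann zeta function for real s (meaningful for s > 1):
   zeta s = sum_{n >= 1} n^{-s}. *)
Definition zeta (R : realType) (s : R) : R :=
  limn (fun N : nat => \sum_(1 <= n < N) ((n%:R : R) `^ (- s))).

(* Coordinates j : 'I_d (0-based) correspond to the paper's coordinates j+1. *)
Definition shiftset (d : nat) (u : {set 'I_d}) : {fset nat} :=
  [fset (val j).+1 | j in enum u]%fset.

Definition supp (d : nat) (h : {ffun 'I_d -> int}) : {fset nat} :=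
  shiftset [set j | h j != 0%R].

Definition rfun (R : realType) (d : nat) (alpha : R) (gamma : {fset nat} -> R)
  (h : {ffun 'I_d -> int}) : R :=
  (gamma (supp h))^-1 * \prod_(j : 'I_d | h j != 0%R) ((`|h j|%:~R : R) `^ alpha).

Definition Aset (R : realType) (d : nat) (alpha : R) (gamma : {fset nat} -> R)
  (M : R) : set {ffun 'I_d -> int} :=
  [set h | rfun alpha gamma h <= M].

Definition C1 (R : realType) (d : nat) (q alpha : R) (gamma : {fset nat} -> R) : R :=
  \sum_(u : {set 'I_d}) (gamma (shiftset u) `^ q * (2 * zeta (alpha * q)) ^+ #|u|).

Arguments Aset {R} d alpha gamma M.
Arguments C1 {R} d q alpha gamma.
Arguments rfun {R} d alpha gamma h.

(* Main.v *)
Set Warnings "-notation-overridden,-notation-incompatible-prefix,-ambiguous-paths,-deprecated".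
Require Import Defs.
From HB Require Import structures.
From mathcomp Require Import all_boot all_order all_algebra finmap.
From mathcomp Require Import all_classical all_reals all_analysis.
From mathcomp Require Import ring lra.
Import Order.TTheory GRing.Theory Num.Theory.
Import numFieldNormedType.Exports.
Local Open Scope classical_set_scope.
Local Open Scope ring_scope.
Section Z.
Variable R : realType.

Definition psum (s : R) (N : nat) : R := \sum_(1 <= n < N) ((n%:R : R) `^ (- s)).

Lemma psum_nd s : nondecreasing_seq (psum s).
Proof.
move=> m n mn; rewrite /psum.
case: m mn => [|m] mn.
  by rewrite big_geq // sumr_ge0 // => i _; exact: powR_ge0.
by rewrite (@big_cat_nat _ _ _ m.+1 1 n) //= lerDl sumr_ge0 // => i _.
Qed.

Lemma psum_pow2 s : 1 < s -> forall k,
  psum s (2 ^ k) <= (1 - (2 `^ (1 - s)) ^+ k) / (1 - 2 `^ (1 - s)).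
Proof.
move=> s1; set c := 2 `^ (1 - s).
have c1 : c < 1.
  have : c <= 1 by rewrite /c -[X in _ <= X](powRr0 2); apply: ler_powR; rewrite ?ler1n // subr_le0 ltW.
  rewrite le_eqVlt => /orP[|//].
  have h21 : ((2:R) == 1) = false by rewrite (eqr_nat R 2 1).
  have h20 : ((2:R) < 0) = false by rewrite ltNge ler0n.
  by rewrite /c powR_eq1 subr_eq0 h21 h20 /= eq_sym (gt_eqF s1).
have c0 : 0 <= c by exact: powR_ge0.
have cn1 : 1 - c != 0 by rewrite subr_eq0 eq_sym (lt_eqF c1).
elim=> [|k IH].
  by rewrite expn0 /psum big_geq // expr0 subrr mul0r.
have blk : \sum_(2 ^ k <= n < 2 ^ k.+1) ((n%:R : R) `^ (- s)) <= c ^+ k.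
  apply: (@le_trans _ _ (\sum_(2 ^ k <= n < 2 ^ k.+1) (((2 ^ k)%:R : R) `^ (- s)))).
    rewrite big_nat_cond [X in _ <= X]big_nat_cond; apply: ler_sum => n /andP[/andP[kn _] _].
    rewrite !powRN lef_pV2 ?posrE ?powR_gt0 ?ltr0n ?expn_gt0 //; last first.
      by apply: (leq_trans _ kn); rewrite expn_gt0.
    by apply: ge0_ler_powR; rewrite ?nnegrE ?ler0n ?ler_nat // ltW // (lt_trans _ s1).
  rewrite sumr_const_nat expnS mul2n -addnn addnK.
  set t := (_ `^ _); rewrite -mulr_natl /t.
  rewrite natrX -(powR_mulrn _ (ler0n _ 2)) -powRrM -powRD; last by rewrite pnatr_eq0 implybT.
  rewrite -(powR_mulrn _ c0) /c -powRrM.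
  by rewrite mulrBl mul1r mulrN [s * _]mulrC.
rewrite /psum (@big_cat_nat _ _ _ (2 ^ k)) //=; last first.
  by rewrite leq_exp2l.
  by rewrite expn_gt0.
apply: (le_trans (lerD IH blk)).
rewrite le_eqVlt; apply/orP; left; apply/eqP.
by rewrite exprS; field.
Qed.

Lemma psum_le_zeta s : 1 < s -> forall N, psum s N <= zeta s.
Proof.
move=> s1 N.
set c := 2 `^ (1 - s).
have c1 : c < 1.
  have : c <= 1 by rewrite /c -[X in _ <= X](powRr0 2); apply: ler_powR; rewrite ?ler1n // subr_le0 ltW.
  rewrite le_eqVlt => /orP[|//].
  have h21 : ((2:R) == 1) = false by rewrite (eqr_nat R 2 1).
  have h20 : ((2:R) < 0) = false by rewrite ltNge ler0n.
  by rewrite /c powR_eq1 subr_eq0 h21 h20 /= eq_sym (gt_eqF s1).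
have c0 : 0 <= c by exact: powR_ge0.
have bnd : forall n, psum s n <= (1 - c)^-1.
  move=> n; apply: (le_trans (@psum_nd s n (2 ^ n)%N (ltnW (ltn_expl _ (ltnSn 1))))).
  apply: (le_trans (psum_pow2 s s1 n)).
  rewrite ler_pdivrMr ?subr_gt0 // mulVf ?subr_eq0 ?(gt_eqF c1) //.
have cv : cvgn (psum s).
  apply: nondecreasing_is_cvgn; first exact: psum_nd.
  by exists (1 - c)^-1 => _ [n _ <-].
exact: (nondecreasing_cvgn_le (psum_nd s) cv N).
Qed.
End Z.
Section Main.
Variable R : realType.
Variable d : nat.

Definition decI K (p : bool * 'I_K.+1) : int :=
  if p.1 then ((p.2 : nat)%:Z) else - ((p.2 : nat)%:Z).
Arguments decI {K}.
Definition encI K (k : int) : bool * 'I_K.+1 := (0 <= k, inord `|k|%N).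

Lemma decI_encI K k : (`|k| <= K)%N -> decI (encI K k) = k.
Proof.
move=> hk; rewrite /decI /encI /= inordK ?ltnS //.
by case: (lerP 0 k) => [k0|k0]; [rewrite gez0_abs | rewrite ltz0_abs ?opprK].
Qed.

Definition dec K (g : {ffun 'I_d -> bool * 'I_K.+1}) : {ffun 'I_d -> int} :=
  [ffun j => decI (g j)].
Arguments dec {K}.
Definition enc K (h : {ffun 'I_d -> int}) : {ffun 'I_d -> bool * 'I_K.+1} :=
  [ffun j => encI K (h j)].

Lemma dec_enc K (h : {ffun 'I_d -> int}) : (forall j, (`|h j| <= K)%N) -> dec (enc K h) = h.
Proof. by move=> hK; apply/ffunP => j; rewrite !ffunE decI_encI. Qed.

Definition Gs (gamma : {fset nat} -> R) : R := \sum_(u : {set 'I_d}) gamma (@shiftset d u).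

Lemma gam_le (gamma : {fset nat} -> R) (u : {set 'I_d}) : (forall v, 0 < gamma v) -> gamma (@shiftset d u) <= Gs gamma.
Proof.
move=> gp; rewrite /Gs (bigD1 u) //= lerDl sumr_ge0 // => v _; exact: ltW.
Qed.

Lemma prod_ge_one (I : finType) (P : pred I) (F : I -> R) i :
  P i -> (forall j, P j -> 1 <= F j) -> F i <= \prod_(j | P j) F j.
Proof.
move=> Pi F1; rewrite (bigD1 i) //= ler_peMr //.
  exact: (le_trans ler01 (F1 i Pi)).
apply: (big_ind (fun x => 1 <= x)) => //.
  by move=> x y; exact: mulr_ege1.
by move=> j /andP[Pj _]; exact: F1.
Qed.

Lemma A_bound (alpha : R) (gamma : {fset nat} -> R) (M : R) (h : {ffun 'I_d -> int}) : 1 < alpha -> (forall v, 0 < gamma v) ->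
  0 < M -> rfun d alpha gamma h <= M -> forall j, (`|h j|%N%:R : R) <= M * Gs gamma.
Proof.
move=> a1 gp M0 hr j.
have Gs0 : 0 <= Gs gamma by rewrite /Gs sumr_ge0 // => v _; exact: ltW.
have [hj0|hjn] := eqVneq (h j) 0.
  by rewrite hj0 /= mulr_ge0 // ltW.
have fac1 : forall i, h i != 0 -> 1 <= (`|h i|%:~R : R) `^ alpha.
  move=> i hi; rewrite -natr_absz.
  have h1 : (1 : R) <= `|h i|%N%:R by rewrite ler1n absz_gt0.
  exact: (le_trans h1 (le1r_powR h1 (ltW a1))).
have h1 : (1 : R) <= `|h j|%N%:R by rewrite ler1n absz_gt0.
apply: (le_trans (le1r_powR h1 (ltW a1))).
rewrite natr_absz.
apply: (le_trans (@prod_ge_one _ (fun i => h i != 0) _ j hjn fac1)).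
move: hr; rewrite /rfun mulrC; rewrite ler_pdivrMr ?gp // => hr.
apply: (le_trans hr); rewrite ler_wpM2l ?(ltW M0) //.
exact: gam_le.
Qed.

Lemma le_truncn_nat (x : R) (n : nat) : 0 <= x -> n%:R <= x -> (n <= Num.truncn x)%N.
Proof. by move=> x0 hx; rewrite leqNgt truncn_lt_nat // -leNgt. Qed.

Lemma A_finite (alpha : R) (gamma : {fset nat} -> R) (M : R) : 1 < alpha -> (forall v, 0 < gamma v) -> 0 < M ->
  finite_set (Aset d alpha gamma M).
Proof.
move=> a1 gp M0.
set K := Num.truncn (M * Gs gamma).
have Gs0 : 0 <= Gs gamma by rewrite /Gs sumr_ge0 // => v _; exact: ltW.
apply: (@sub_finite_set _ _ [set dec g | g in [set: {ffun 'I_d -> bool * 'I_K.+1}]]).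
  move=> h hA; exists (enc K h) => //; apply: dec_enc => j.
  apply: le_truncn_nat; first by rewrite mulr_ge0 // ltW.
  exact: (@A_bound alpha gamma M h a1 gp M0 hA j).
exact: finite_image.
Qed.


Definition Gf K (s : R) (u : {set 'I_d}) (j : 'I_d) (p : bool * 'I_K.+1) : R :=
  if j \in u then (if (p.2 : nat) != 0%N then (((p.2 : nat)%:R : R) `^ (- s)) else 0)
  else (p == (true, ord0))%:R.

Definition W K (gamma : {fset nat} -> R) (s q : R) (g : {ffun 'I_d -> bool * 'I_K.+1}) : R :=
  \sum_(u : {set 'I_d}) gamma (@shiftset d u) `^ q * \prod_j Gf K s u j (g j).

Definition w (gamma : {fset nat} -> R) (s q : R) (h : {ffun 'I_d -> int}) : R :=
  gamma (supp h) `^ q * \prod_(j | h j != 0) ((`|h j|%:~R : R) `^ (- s)).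

Lemma Gf_ge0 K s u j p : 0 <= Gf K s u j p.
Proof.
rewrite /Gf; case: ifP => _; last exact: ler0n.
by case: ifP => _ //; exact: powR_ge0.
Qed.

Lemma w_le_W K gamma s q (h : {ffun 'I_d -> int}) : (forall j, (`|h j| <= K)%N) ->
  w gamma s q h <= W K gamma s q (enc K h).
Proof.
move=> hK; rewrite /W (bigD1 ([set j | h j != 0]%SET : {set 'I_d})) //=.
rewrite /w; set u0 := ([set j | h j != 0]%SET : {set 'I_d}).
have E : \prod_j Gf K s u0 j (enc K h j) = \prod_(j | h j != 0) ((`|h j|%:~R : R) `^ (- s)).
  rewrite [RHS]big_mkcond; apply: eq_bigr => j _; rewrite /Gf ffunE inE /encI /=.
  case: (eqVneq (h j) 0) => [->|hj] /=.
    have -> : inord 0 = ord0 :> 'I_K.+1 by apply/val_inj; rewrite /= inordK.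
    by rewrite eqxx.
  by rewrite inordK ?ltnS // absz_eq0 hj /= natr_absz.
rewrite E /supp lerDl sumr_ge0 // => u _.
by rewrite mulr_ge0 ?powR_ge0 // prodr_ge0 // => j _; exact: Gf_ge0.
Qed.

Lemma sumGf K s : 1 < s ->
  \sum_(i < K.+1) (if (i : nat) != 0%N then (((i : nat)%:R : R) `^ (- s)) else 0) <= zeta s.
Proof.
move=> s1; apply: le_trans (@psum_le_zeta R s s1 K.+1).
rewrite /psum -(big_mkord xpredT (fun i : nat => (if i != 0%N then ((i%:R : R) `^ (- s)) else 0))).
rewrite big_ltn //= add0r le_eqVlt; apply/orP; left; apply/eqP.
by apply: eq_big_nat => i /andP[i1 _]; rewrite -lt0n i1.
Qed.

Lemma sumW K gamma s q : 1 < s ->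
  \sum_(g : {ffun 'I_d -> bool * 'I_K.+1}) W K gamma s q g <=
  \sum_(u : {set 'I_d}) gamma (@shiftset d u) `^ q * (2 * zeta s) ^+ #|u|.
Proof.
move=> s1; rewrite /W exchange_big /=; apply: ler_sum => u _.
rewrite -mulr_sumr; apply: ler_wpM2l; first exact: powR_ge0.
rewrite -bigA_distr_bigA /= -prodr_const [X in _ <= X]big_mkcond /=.
apply: ler_prod => j _; rewrite sumr_ge0 /=; last by move=> p _; exact: Gf_ge0.
case: (boolP (j \in u)) => ju.
  rewrite /Gf ju -(pair_bigA _ (fun (b : bool) (i : 'I_K.+1) => if (i : nat) != 0%N then ((i : nat)%:R : R) `^ (- s) else 0)) /= big_bool /= mulr_natl mulr2n.
  by apply: lerD; exact: sumGf.
rewrite /Gf (negbTE ju) (bigD1 (true, ord0)) //= big1 ?addr0 //.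
by move=> p /negbTE ->.
Qed.


Lemma prod_powR (I : finType) (P : pred I) (F : I -> R) a : (forall i, P i -> 0 <= F i) ->
  \prod_(i | P i) (F i `^ a) = (\prod_(i | P i) F i) `^ a.
Proof.
move=> F0.
have : 0 <= \prod_(i | P i) F i /\ \prod_(i | P i) (F i `^ a) = (\prod_(i | P i) F i) `^ a.
  apply: (big_rec2 (fun x y => 0 <= y /\ x = y `^ a)).
    by split; [exact: ler01 | rewrite powR1].
  move=> i x y Pi [y0 ->]; split; first exact: mulr_ge0 (F0 i Pi) y0.
  by rewrite powRM // F0.
by case.
Qed.

Lemma fac1 (alpha : R) (h : {ffun 'I_d -> int}) i : 1 < alpha -> h i != 0 ->
  1 <= (`|h i|%:~R : R) `^ alpha.
Proof.
move=> a1 hi; rewrite -natr_absz.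
have h1 : (1 : R) <= `|h i|%N%:R by rewrite ler1n absz_gt0.
exact: (le_trans h1 (le1r_powR h1 (ltW a1))).
Qed.

Lemma one_le_w (alpha : R) gamma (M q : R) (h : {ffun 'I_d -> int}) : 1 < alpha ->
  (forall v, 0 < gamma v) -> 0 < M -> 0 < q -> rfun d alpha gamma h <= M ->
  1 <= M `^ q * w gamma (alpha * q) q h.
Proof.
move=> a1 gp M0 q0 hr.
set P := \prod_(j | h j != 0) ((`|h j|%:~R : R) `^ alpha).
have P1 : 1 <= P.
  apply: (big_ind (fun x => 1 <= x)) => //; first by move=> x y; exact: mulr_ege1.
  by move=> j hj; exact: fac1.
have P0 : 0 < P by exact: lt_le_trans ltr01 P1.
rewrite /w.
have -> : \prod_(j | h j != 0) ((`|h j|%:~R : R) `^ (- (alpha * q))) = (P `^ q)^-1.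
  rewrite -powRN /P -prod_powR; last by move=> i _; exact: powR_ge0.
  by apply: eq_bigr => j _; rewrite -powRrM mulrN.
move: hr; rewrite /rfun -/P mulrC ler_pdivrMr ?gp // => hr.
rewrite mulrA ler_pdivlMr ?powR_gt0 // mul1r -powRM ?(ltW M0) ?(ltW (gp _)) //.
by apply: ge0_ler_powR; rewrite ?nnegrE ?(ltW q0) ?(ltW P0) // mulr_ge0 ?(ltW M0) ?(ltW (gp _)).
Qed.


Lemma upper (alpha : R) gamma (M q : R) : 1 < alpha ->
  (forall v, 0 < gamma v) -> 0 < M -> alpha^-1 < q ->
  (#|` fset_set (Aset d alpha gamma M)|%:R : R) <= M `^ q * C1 d q alpha gamma.
Proof.
move=> a1 gp M0 hq.
have a0 : 0 < alpha by exact: lt_trans ltr01 a1.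
have q0 : 0 < q by apply: lt_trans hq; rewrite invr_gt0.
have s1 : 1 < alpha * q by rewrite -(mulfV (lt0r_neq0 a0)) ltr_pM2l.
have fin := @A_finite alpha gamma M a1 gp M0.
set S := fset_set (Aset d alpha gamma M).
set K := Num.truncn (M * Gs gamma).
have Gs0 : 0 <= Gs gamma by rewrite /Gs sumr_ge0 // => v _; exact: ltW.
have hK : forall h, h \in S -> forall j, (`|h j| <= K)%N.
  move=> h; rewrite /S in_fset_set // inE => hA j.
  apply: le_truncn_nat; first by rewrite mulr_ge0 // ltW.
  exact: (@A_bound alpha gamma M h a1 gp M0 hA j).
rewrite card_fset_sum1 natr_sum.
apply: (@le_trans _ _ (\sum_(h <- S) M `^ q * w gamma (alpha * q) q h)).
  rewrite big_seq [X in _ <= X]big_seq; apply: ler_sum => h hS.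
  move: hS; rewrite /S in_fset_set // inE => hA.
  exact: one_le_w.
rewrite -mulr_sumr; apply: ler_wpM2l; first exact: powR_ge0.
apply: (@le_trans _ _ (\sum_(h <- S) W K gamma (alpha * q) q (enc K h))).
  rewrite big_seq [X in _ <= X]big_seq; apply: ler_sum => h hS.
  exact: (@w_le_W K gamma _ q h (hK h hS)).
rewrite -(big_map (enc K) xpredT (W K gamma (alpha * q) q)).
rewrite big_uniq /=; last first.
  rewrite map_inj_in_uniq ?fset_uniq // => h1 h2 h1S h2S e.
  by rewrite -(@dec_enc K h1 (hK h1 h1S)) e (@dec_enc K h2 (hK h2 h2S)).
apply: (le_trans _ (@sumW K gamma (alpha * q) q s1)).
rewrite big_mkcond /=; apply: ler_sum => g _.
case: ifP => _ //.
rewrite /W sumr_ge0 // => u _.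
by rewrite mulr_ge0 ?powR_ge0 // prodr_ge0 // => j _; exact: Gf_ge0.
Qed.


Lemma shiftset0 : @shiftset d (finset.set0) = fset0.
Proof.
rewrite /shiftset enum_set0; apply/fsetP => x; rewrite inE.
by apply/imfsetP => -[y]; rewrite in_nil.
Qed.

Lemma shiftset1 (j0 : 'I_d) : val j0 = 0%N -> @shiftset d [set j0]%SET = [fset 1%N]%fset.
Proof.
move=> v0; rewrite /shiftset enum_set1; apply/fsetP => x; rewrite !inE.
apply/imfsetP/eqP => [[y]|->].
  by rewrite inE => /eqP -> ->; rewrite v0.
by exists j0; rewrite ?inE ?v0.
Qed.

Lemma lower (alpha : R) gamma (M : R) : (0 < d)%N -> 1 < alpha ->
  (forall v, 0 < gamma v) -> gamma fset0 = 1 -> 1 <= M ->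
  (gamma [fset 1%N]%fset * M) `^ (alpha^-1) <= (#|` fset_set (Aset d alpha gamma M)|%:R : R).
Proof.
move=> d0 a1 gp g0 M1.
have M0 : 0 < M by exact: lt_le_trans ltr01 M1.
have a0 : 0 < alpha by exact: lt_trans ltr01 a1.
have fin := @A_finite alpha gamma M a1 gp M0.
set X := (gamma [fset 1%N]%fset * M) `^ (alpha^-1).
have X0 : 0 <= X by exact: powR_ge0.
set m := Num.truncn X.
set j0 : 'I_d := Ordinal d0.
pose hh (k : nat) : {ffun 'I_d -> int} := [ffun j => if j == j0 then (k%:Z) else 0].
have hhinj : injective hh.
  by move=> k1 k2 /ffunP /(_ j0); rewrite !ffunE eqxx => -[].
have sub : {subset map hh (iota 0 m.+1) <= fset_set (Aset d alpha gamma M)}.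
  move=> h /mapP [k]; rewrite mem_iota add0n ltnS => /andP[_ km] ->.
  rewrite in_fset_set // inE; change (rfun d alpha gamma (hh k) <= M); rewrite /rfun.
  case: (posnP k) => [->|kp].
    have -> : supp (hh 0%N) = fset0.
      rewrite /supp -shiftset0; congr shiftset; apply/setP => j.
      by rewrite !inE ffunE; case: ifP.
    rewrite g0 invr1 mul1r big1 // => j; rewrite ffunE; case: ifP => _; by rewrite eqxx.
  have -> : supp (hh k) = [fset 1%N]%fset.
    rewrite /supp -(@shiftset1 j0) //; congr shiftset; apply/setP => j.
    rewrite !inE ffunE; case: ifP => //= _.
    by rewrite -lt0n kp.
  rewrite (bigD1 j0) /=; last by rewrite ffunE eqxx -lt0n kp.
  rewrite big1 ?mulr1; last first.
    by move=> j /andP[hj jn]; move: hj; rewrite ffunE (negbTE jn) eqxx.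
  rewrite ffunE eqxx mulrC ler_pdivrMr ?gp // mulrC.
  have kX : (k%:R : R) <= X.
    by apply: (@le_trans _ _ (m%:R)); [rewrite ler_nat | rewrite /m truncn_le].
  apply: (@le_trans _ _ (X `^ alpha)).
    by apply: ge0_ler_powR; rewrite ?nnegrE ?(ltW a0) // -natr_absz ler0n.
  by rewrite /X -powRrM mulVf ?lt0r_neq0 // powRr1 // mulr_ge0 ?(ltW (gp _)) ?(ltW M0).
have un : uniq (map hh (iota 0 m.+1)) by rewrite map_inj_uniq // iota_uniq.
have := uniq_leq_size un sub; rewrite size_map size_iota => hs.
apply: (le_trans (ltW (truncnS_gt X))).
by rewrite ler_nat.
Qed.
End Main.

Theorem lemma5 (R : realType) (d : nat) (alpha : R) (gamma : {fset nat} -> R) (M : R) :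
  (0 < d)%N -> 1 < alpha ->
  (forall u : {fset nat}, 0 < gamma u) -> gamma fset0 = 1 ->
  0 < M ->
  finite_set (Aset d alpha gamma M) /\
  (forall q : R, alpha^-1 < q ->
     (#|` fset_set (Aset d alpha gamma M)|%:R : R) <= M `^ q * C1 d q alpha gamma) /\
  (1 <= M ->
     (gamma [fset 1%N]%fset * M) `^ (alpha^-1) <= (#|` fset_set (Aset d alpha gamma M)|%:R : R)).
Proof.
move=> d0 a1 gp g0 M0; split; first exact: (@A_finite R d alpha gamma M a1 gp M0).
split; first by move=> q hq; exact: (@upper R d alpha gamma M q a1 gp M0 hq).
by move=> M1; exact: (@lower R d alpha gamma M d0 a1 gp g0 M1).
Qed.
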